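(* Let $X$ be an infinite dimensional separable Banach space and $T:X\to X$ a continuous linear operator. The following are equivalent: (1) for every $\delta>0$, $(X,T)$ is transitively sensitive with sensitive constant $\delta$; (2) there exists $\delta_0>0$ such that $(X,T)$ is transitively sensitive with sensitive constant $\delta_0$; (3) there exists $\delta_0>0$ such that $S_T(W_0,\delta_0)\cap N_T(U,V)\neq\varnothing$ for all nonempty open $U,V\subset X$ and every neighbourhood $W_0$ of $0$.
   Context: $N_T(U,V)=\{n\in\mathbb{Z}_+:U\cap T^{-n}V\neq\varnothing\}$ and $S_T(W,\delta)=\{n\in\mathbb{Z}_+:\exists x_1,x_2\in W,\ \|T^nx_1-T^nx_2\|>\delta\}$. $(X,T)$ is transitively sensitive with sensitive constant $\delta$ if $S_T(W,\delta)\cap N_T(U,V)\neq\varnothing$ for all nonempty open $U,V,W\subset X$. *)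

(* Defs.v *)
From HB Require Import structures.
From mathcomp Require Import all_boot all_order all_algebra.
From mathcomp Require Import all_classical all_reals all_analysis.
Set Implicit Arguments. Unset Strict Implicit. Unset Printing Implicit Defensive.
Import Order.TTheory GRing.Theory Num.Theory.
Import numFieldNormedType.Exports.
Local Open Scope classical_set_scope.
Local Open Scope ring_scope.

Section Defs.
Variables (R : realType) (X : normedModType R).

Definition N_T (T : X -> X) (U V : set X) : set nat :=
  [set n | U `&` (iter n T) @^-1` V !=set0].

Definition S_T (T : X -> X) (W : set X) (delta : R) : set nat :=
  [set n | exists x1 x2, W x1 /\ W x2 /\ delta < `|iter n T x1 - iter n T x2|].

Definition transitively_sensitive (T : X -> X) (delta : R) : Prop :=
  forall U V W : set X, open U -> U !=set0 -> open V -> V !=set0 ->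
    open W -> W !=set0 -> S_T T W delta `&` N_T T U V !=set0.

Definition separable_space : Prop :=
  exists D : set X, countable D /\ dense D.

Definition infinite_dimensional : Prop :=
  forall (n : nat) (v : 'I_n -> X), exists x : X,
    forall c : 'I_n -> R, x <> \sum_(i < n) c i *: v i.
End Defs.

(* Main.v *)
Require Import Defs.
From HB Require Import structures.
From mathcomp Require Import all_boot all_order all_algebra.
From mathcomp Require Import all_classical all_reals all_analysis.
Import Order.TTheory GRing.Theory Num.Theory.
Import numFieldNormedType.Exports.
Local Open Scope classical_set_scope.
Local Open Scope ring_scope.

Set Implicit Arguments.

Lemma iter_lin (R : realType) (X : completeNormedModType R) (T : {linear X -> X})
  n (a b : X) (c : R) : iter n T (a + c *: b) = iter n T a + c *: iter n T b.
Proof. elim: n => [//|n IH]; by rewrite !iterS IH linearD linearZ. Qed.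

Lemma ts_ball (R : realType) (X : completeNormedModType R) (T : {linear X -> X}) d :
  transitively_sensitive T d ->
  forall U V W0 : set X, open U -> U !=set0 -> open V -> V !=set0 ->
    nbhs (0 : X) W0 -> S_T T W0 d `&` N_T T U V !=set0.
Proof.
move=> H U V W0 oU U0 oV V0 /nbhs_ballP[e e0 sub].
have [n [[x1 [x2 [h1 [h2 h3]]]] hn]] := H U V _ oU U0 oV V0 (ball_open 0 e)
  (ex_intro _ 0 (ballxx _ e0)).
by exists n; split => //; exists x1, x2; split; [apply: sub|split; [apply: sub|]].
Qed.

Lemma scale_ts (R : realType) (X : completeNormedModType R) (T : {linear X -> X}) d0 :
  0 < d0 ->
  (forall U V W0 : set X, open U -> U !=set0 -> open V -> V !=set0 ->
    nbhs (0 : X) W0 -> S_T T W0 d0 `&` N_T T U V !=set0) ->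
  forall d, 0 < d -> transitively_sensitive T d.
Proof.
move=> d00 H d dp U V W oU U0 oV V0 oW [w Ww].
have : nbhs w W by rewrite openE in oW; exact: oW.
move=> /nbhs_ballP[r r0 sub].
set c := d / d0.
have c0 : 0 < c by rewrite divr_gt0.
have rc0 : 0 < r / c by rewrite divr_gt0.
have [n [[y1 [y2 [h1 [h2 h3]]]] hn]] := H U V _ oU U0 oV V0
  (proj2 (nbhs_ballP 0 _) (ex_intro2 _ _ (r / c) rc0 (@subset_refl _ _))).
exists n; split => //; exists (w + c *: y1), (w + c *: y2).
have inb : forall y, ball (0:X) (r / c) y -> W (w + c *: y).
  move=> y; rewrite -ball_normE /= sub0r normrN => hy; apply: sub.
  rewrite -ball_normE /= opprD addrA subrr sub0r normrN normrZ gtr0_norm //.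
  by rewrite -ltr_pdivlMl // mulrC.
split; first exact: inb.
split; first exact: inb.
rewrite !iter_lin.
have -> : forall a b e : X, a + b - (a + e) = b - e by move=> a b e; rewrite opprD addrACA subrr add0r.
rewrite -scalerBr normrZ gtr0_norm //.
have -> : d = c * d0 by rewrite /c divfK // gt_eqF.
by rewrite ltr_pM2l.
Qed.

Theorem proposition7p3 (R : realType) (X : completeNormedModType R)
    (T : {linear X -> X}) :
  infinite_dimensional X -> separable_space X -> continuous T ->
  [/\ ((forall delta : R, 0 < delta -> transitively_sensitive T delta) <->
       (exists delta0 : R, 0 < delta0 /\ transitively_sensitive T delta0)),
      ((exists delta0 : R, 0 < delta0 /\ transitively_sensitive T delta0) <->
       (exists delta0 : R, 0 < delta0 /\
          forall U V W0 : set X, open U -> U !=set0 -> open V -> V !=set0 ->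
            nbhs (0 : X) W0 -> S_T T W0 delta0 `&` N_T T U V !=set0)) &
      ((forall delta : R, 0 < delta -> transitively_sensitive T delta) <->
       (exists delta0 : R, 0 < delta0 /\
          forall U V W0 : set X, open U -> U !=set0 -> open V -> V !=set0 ->
            nbhs (0 : X) W0 -> S_T T W0 delta0 `&` N_T T U V !=set0))].
Proof.
move=> _ _ _; split; split.
- move=> H; exists 1; split; [exact: ltr01 | exact: (H 1 ltr01)].
- move=> [d0 [d00 H]] d dp; exact: (scale_ts T d00 (ts_ball T H) d dp).
- move=> [d0 [d00 H]]; exists d0; split; [exact: d00 | exact: (ts_ball T H)].
- move=> [d0 [d00 H]]; exists d0; split; [exact: d00 | exact: (scale_ts T d00 H d0 d00)].
- move=> H; exists 1; split; [exact: ltr01 | exact: (ts_ball T (H 1 ltr01))].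
- move=> [d0 [d00 H]] d dp; exact: (scale_ts T d00 H d dp).
Qed.
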